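(* Let $H$ be a Hilbert space, $P_A,P_B$ orthogonal projections on $H$, and $R_0\in B(H)$ a positive operator. Define the sequence $(R_n)_{n\ge0}$ by $R_{n+1}=\Phi_{P_B}(R_n)$ for $n$ even and $R_{n+1}=\Phi_{P_A}(R_n)$ for $n$ odd, and let $K:=\ker P_A\cap\ker P_B$. Then $0\le R_{n+1}\le R_n\le R_0$ for all $n$ (Loewner order), and there is a unique positive operator $R_\infty\in B(H)$ with $R_n\to R_\infty$ in the strong operator topology. Moreover: (1) $0\le R_\infty\le R_0$; (2) $\operatorname{ran}(R_\infty)\subset K$; (3) $R_\infty=\Phi_{P_A}(R_\infty)=\Phi_{P_B}(R_\infty)$.
   Context: For an orthogonal projection $P$ on $H$ and a positive operator $R\in B(H)$, the weighted residual map is $\Phi_P(R):=R^{1/2}(I-P)R^{1/2}$, where $R^{1/2}$ is the positive square root. The Loewner order is $A\le B$ iff $B-A$ is positive. *)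

(* Defs.v *)
From Stdlib Require Import ClassicalEpsilon.
From mathcomp Require Import all_boot all_order all_algebra.
From mathcomp.real_closed Require Import complex.
From mathcomp Require Import reals.

Set Implicit Arguments.
Unset Strict Implicit.
Unset Printing Implicit Defensive.

Import Order.TTheory GRing.Theory Num.Theory.
Local Open Scope ring_scope.

Section Hilbert.
Variables (R : realType) (V : lmodType R[i]) (ip : V -> V -> R[i]).

Definition hnorm (x : V) : R := Num.sqrt (complex.Re (ip x x)).

Definition is_hilbert : Prop :=
  [/\ (forall (a : R[i]) (x y z : V), ip (a *: x + y) z = a * ip x z + ip y z),
      (forall x y : V, ip y x = (ip x y)^*),
      (forall x : V, 0 <= ip x x),
      (forall x : V, ip x x = 0 -> x = 0) &
      (forall u : nat -> V,
         (forall e : R, 0 < e -> exists N : nat, forall m n : nat,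
              (N <= m)%N -> (N <= n)%N -> hnorm (u m - u n) < e) ->
         exists l : V, forall e : R, 0 < e -> exists N : nat, forall n : nat,
              (N <= n)%N -> hnorm (u n - l) < e)].

Definition bounded_op (T : V -> V) : Prop :=
  (forall (a : R[i]) (x y : V), T (a *: x + y) = a *: T x + T y) /\
  (exists M : R, forall x : V, hnorm (T x) <= M * hnorm x).

Definition positive_op (T : V -> V) : Prop :=
  bounded_op T /\ forall x : V, 0 <= ip (T x) x.

Definition orth_proj (P : V -> V) : Prop :=
  [/\ bounded_op P, (forall x : V, P (P x) = P x) &
      (forall x y : V, ip (P x) y = ip x (P y))].

Definition loewner_le (A B : V -> V) : Prop := positive_op (fun x => B x - A x).

Definition op_sqrt (T : V -> V) : V -> V :=
  epsilon (inhabits id) (fun S => positive_op S /\ forall x : V, S (S x) = T x).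

Definition Phi (P T : V -> V) : V -> V :=
  fun x => op_sqrt T (op_sqrt T x - P (op_sqrt T x)).

Fixpoint alt_seq (PA PB R0 : V -> V) (n : nat) : V -> V :=
  match n with
  | O => R0
  | S m => if odd m then Phi PA (alt_seq PA PB R0 m)
           else Phi PB (alt_seq PA PB R0 m)
  end.

Definition sot_conv (Rn : nat -> V -> V) (L : V -> V) : Prop :=
  forall x : V, forall e : R, 0 < e -> exists N : nat, forall n : nat,
    (N <= n)%N -> hnorm (Rn n x - L x) < e.

End Hilbert.

(* Main.v *)
Require Import Defs.
From mathcomp Require Import all_boot all_order all_algebra.
From mathcomp.real_closed Require Import complex.
From mathcomp Require Import reals.
From mathcomp Require Import classical_sets.
From mathcomp Require Import ring lra.
From Stdlib Require Import ClassicalEpsilon.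
Import Order.TTheory GRing.Theory Num.Theory.
Local Open Scope ring_scope.
Local Notation "x %:C" := (x%:C)%C : ring_scope.

Set Implicit Arguments.
Unset Strict Implicit.
Unset Printing Implicit Defensive.

Section RealAux.
Local Open Scope classical_set_scope.
Lemma decr_cauchy (R : realType) (r : nat -> R) :
  (forall n, r n.+1 <= r n) -> (forall n, 0 <= r n) ->
  forall e : R, 0 < e -> exists N : nat, forall n, (N <= n)%N -> r N - r n < e.
Proof.
move=> dec pos e e0.
have mono : forall n m, (n <= m)%N -> r m <= r n.
  move=> n m /subnKC <-. elim: (m - n)%N => [|d IH]; first by rewrite addn0.
  by rewrite addnS; apply: le_trans (dec _) IH.
set E := [set y | exists n, y = r n].
have hE : has_inf E.
  split; first by exists (r 0%N); exists 0%N.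
  by exists 0 => y [n ->].
case: (inf_adherent e0 hE) => y [N ->] hN.
exists N => n hn.
have : inf E <= r n by apply: ge_inf; [case: hE | exists n].
lra.
Qed.
End RealAux.

Section Hilb.
Variables (R : realType) (V : lmodType R[i]) (ip : V -> V -> R[i]).
Hypothesis hH : is_hilbert ip.

Local Notation Rc := (@complex.Re R).
Local Notation Ic := (@complex.Im R).
Local Notation nrm := (hnorm ip).

Lemma conjE (a b : R) : ((a +i* b)%C)^* = (a -i* b)%C.
Proof. reflexivity. Qed.

Lemma cplx_eq (z w : R[i]) : Rc z = Rc w -> Ic z = Ic w -> z = w.
Proof. by case: z => a b; case: w => c d /= -> ->. Qed.

Lemma cplx_ge0 (z : R[i]) : (0 <= z) = (Ic z == 0) && (0 <= Rc z).
Proof. by case: z => a b; rewrite lecE /= eq_sym. Qed.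

Lemma RcD (z w : R[i]) : Rc (z + w) = Rc z + Rc w.
Proof. by case: z; case: w. Qed.
Lemma IcD (z w : R[i]) : Ic (z + w) = Ic z + Ic w.
Proof. by case: z; case: w. Qed.
Lemma RcN (z : R[i]) : Rc (- z) = - Rc z.
Proof. by case: z. Qed.
Lemma IcN (z : R[i]) : Ic (- z) = - Ic z.
Proof. by case: z. Qed.
Lemma RcM (z w : R[i]) : Rc (z * w) = Rc z * Rc w - Ic z * Ic w.
Proof. by case: z; case: w. Qed.
Lemma IcM (z w : R[i]) : Ic (z * w) = Rc z * Ic w + Ic z * Rc w.
Proof. by case: z => a b; case: w => c d /=; ring. Qed.
Lemma RcC (r : R) : Rc (r%:C) = r. Proof. by []. Qed.
Lemma IcC (r : R) : Ic (r%:C) = 0. Proof. by []. Qed.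
Lemma RcJ (z : R[i]) : Rc (z^*) = Rc z. Proof. by case: z. Qed.
Lemma IcJ (z : R[i]) : Ic (z^*) = - Ic z. Proof. by case: z. Qed.
Lemma Rc0 : Rc 0 = 0. Proof. by []. Qed.
Lemma Ic0 : Ic 0 = 0. Proof. by []. Qed.
Lemma Rc1 : Rc 1 = 1. Proof. by []. Qed.
Lemma Ic1 : Ic 1 = 0. Proof. by []. Qed.
Lemma RcB (z w : R[i]) : Rc (z - w) = Rc z - Rc w.
Proof. by rewrite RcD RcN. Qed.
Lemma IcB (z w : R[i]) : Ic (z - w) = Ic z - Ic w.
Proof. by rewrite IcD IcN. Qed.
Lemma RcCM (r : R) z : Rc (r%:C * z) = r * Rc z.
Proof. by rewrite RcM RcC IcC mul0r subr0. Qed.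
Lemma IcCM (r : R) z : Ic (r%:C * z) = r * Ic z.
Proof. by rewrite IcM RcC IcC mul0r addr0. Qed.

Definition rsimp := (RcD, IcD, RcN, IcN, RcM, IcM, RcC, IcC, RcJ, IcJ, Rc0, Ic0, Rc1, Ic1).

Definition semiip (f : V -> V -> R[i]) :=
  [/\ forall a x y z, f (a *: x + y) z = a * f x z + f y z,
      forall x y, f y x = (f x y)^* & forall x, 0 <= f x x].

Section Form.
Variable f : V -> V -> R[i].
Hypothesis hf : semiip f.

Lemma f0l z : f 0 z = 0.
Proof.
case: hf => L _ _. have := L 1 0 0 z. rewrite scaler0 addr0 mul1r => H.
by have := congr1 (fun t => t - f 0 z) H; rewrite addrK subrr.
Qed.
Lemma fDl x y z : f (x + y) z = f x z + f y z.
Proof. case: hf => L _ _. by rewrite -[x]scale1r L mul1r scale1r. Qed.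
Lemma fZl a x z : f (a *: x) z = a * f x z.
Proof. case: hf => L _ _. by rewrite -[a *: x]addr0 L f0l addr0. Qed.
Lemma fNl x z : f (- x) z = - f x z.
Proof. by rewrite -scaleN1r fZl mulN1r. Qed.
Lemma fBl x y z : f (x - y) z = f x z - f y z.
Proof. by rewrite fDl fNl. Qed.
Lemma fDr x y z : f z (x + y) = f z x + f z y.
Proof. case: hf => _ S _. by rewrite S fDl rmorphD (S x z) (S y z). Qed.
Lemma fZr a x z : f z (a *: x) = a^* * f z x.
Proof. case: hf => _ S _. by rewrite S fZl rmorphM (S x z). Qed.
Lemma f0r z : f z 0 = 0.
Proof. by rewrite -(scale0r 0) fZr conjC0 mul0r. Qed.
Lemma fNr x z : f z (- x) = - f z x.
Proof. by rewrite -scaleN1r fZr rmorphN1 mulN1r. Qed.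
Lemma fBr x y z : f z (x - y) = f z x - f z y.
Proof. by rewrite fDr fNr. Qed.
Lemma fxx_Ic x : Ic (f x x) = 0.
Proof. case: hf => _ _ P. by have := P x; rewrite cplx_ge0 => /andP[/eqP]. Qed.
Lemma fxx_Rc x : 0 <= Rc (f x x).
Proof. case: hf => _ _ P. by have := P x; rewrite cplx_ge0 => /andP[]. Qed.
Lemma fsym x y : f y x = (f x y)^*.
Proof. by case: hf. Qed.

Definition nrm2 (c : R[i]) := Rc c ^+ 2 + Ic c ^+ 2.

Lemma CS_gen x y : nrm2 (f x y) <= Rc (f x x) * Rc (f y y).
Proof.
set c := f x y. set A := Rc (f x x). set B := Rc (f y y).
have key : forall t : R, 0 <= A - 2 * t * nrm2 c + t ^+ 2 * nrm2 c * B.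
  move=> t. have := fxx_Rc (x - (t%:C * c) *: y).
  rewrite !(fBl, fBr, fZl, fZr) -/c (fsym x y) -/c.
  rewrite /A /B /nrm2 !rsimp (fxx_Ic y) => H.
  apply: le_trans H _; rewrite le_eqVlt; apply/orP; left; apply/eqP; ring.
have N0 : 0 <= nrm2 c by rewrite /nrm2; nra.
have A0 : 0 <= A := fxx_Rc x. have B0 : 0 <= B := fxx_Rc y.
have [Nz|Np] := eqVneq (nrm2 c) 0; first by rewrite Nz; nra.
have Npos : 0 < nrm2 c by rewrite lt_def Np N0.
have [Bz|Bp] := eqVneq B 0.
  have := key ((A + 1) / (2 * nrm2 c)). rewrite Bz mulr0 addr0.
  have -> : 2 * ((A + 1) / (2 * nrm2 c)) * nrm2 c = A + 1.
    by field; rewrite Np /=; lra.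
  lra.
have Bpos : 0 < B by rewrite lt_def Bp B0.
have := key (B^-1).
have -> : B^-1 ^+ 2 * nrm2 c * B = B^-1 * nrm2 c by field.
move=> H.
have : 0 <= B * (A - 2 * B^-1 * nrm2 c + B^-1 * nrm2 c) by apply: mulr_ge0; lra.
have -> : B * (A - 2 * B^-1 * nrm2 c + B^-1 * nrm2 c) = A * B - nrm2 c by field.
lra.
Qed.

End Form.

Lemma ip_semi : semiip ip.
Proof. by case: hH => L S P _ _; split. Qed.

Definition ipDl := fDl ip_semi. Definition ipZl := fZl ip_semi.
Definition ipNl := fNl ip_semi. Definition ipBl := fBl ip_semi.
Definition ipDr := fDr ip_semi. Definition ipZr := fZr ip_semi.
Definition ipNr := fNr ip_semi. Definition ipBr := fBr ip_semi.
Definition ip0l := f0l ip_semi. Definition ip0r := f0r ip_semi.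
Definition ipsym := fsym ip_semi.
Definition ipxx_Ic := fxx_Ic ip_semi.
Definition ipxx_Rc := fxx_Rc ip_semi.

Lemma nrm_ge0 x : 0 <= nrm x.
Proof. exact: sqrtr_ge0. Qed.

Lemma nrm_sq x : nrm x ^+ 2 = Rc (ip x x).
Proof. by rewrite /hnorm sqr_sqrtr // ipxx_Rc. Qed.

Lemma sq_le_bound (a b : R) : a ^+ 2 <= b ^+ 2 -> 0 <= b -> a <= b.
Proof. move=> H1 H2. nra. Qed.

Lemma sq_le_bound2 (a b : R) : a ^+ 2 <= b ^+ 2 -> 0 <= b -> - b <= a.
Proof. move=> H1 H2. nra. Qed.

Lemma CS x y : nrm2 (ip x y) <= (nrm x * nrm y) ^+ 2.
Proof. by rewrite exprMn !nrm_sq; apply: CS_gen ip_semi x y. Qed.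

Lemma Rc_ip_le x y : Rc (ip x y) <= nrm x * nrm y.
Proof.
apply: sq_le_bound; last by rewrite mulr_ge0 ?nrm_ge0.
apply: le_trans (CS x y). rewrite /nrm2. have := sqr_ge0 (Ic (ip x y)). lra.
Qed.
Lemma Rc_ip_ge x y : - (nrm x * nrm y) <= Rc (ip x y).
Proof.
apply: sq_le_bound2; last by rewrite mulr_ge0 ?nrm_ge0.
apply: le_trans (CS x y). rewrite /nrm2. have := sqr_ge0 (Ic (ip x y)). lra.
Qed.
Lemma Ic_ip_le x y : Ic (ip x y) <= nrm x * nrm y.
Proof.
apply: sq_le_bound; last by rewrite mulr_ge0 ?nrm_ge0.
apply: le_trans (CS x y). rewrite /nrm2. have := sqr_ge0 (Rc (ip x y)). lra.
Qed.
Lemma Ic_ip_ge x y : - (nrm x * nrm y) <= Ic (ip x y).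
Proof.
apply: sq_le_bound2; last by rewrite mulr_ge0 ?nrm_ge0.
apply: le_trans (CS x y). rewrite /nrm2. have := sqr_ge0 (Rc (ip x y)). lra.
Qed.

Lemma nrm_triangle x y : nrm (x + y) <= nrm x + nrm y.
Proof.
apply: sq_le_bound; last by rewrite addr_ge0 ?nrm_ge0.
rewrite nrm_sq ipDl !ipDr !RcD -!nrm_sq (ipsym x y) RcJ.
have := Rc_ip_le x y. nra.
Qed.

Lemma nrm2_conj (a : R[i]) : a * a^* = (nrm2 a)%:C.
Proof. case: a => p q. apply: cplx_eq; rewrite /nrm2 /= ; ring. Qed.

Lemma nrm2_ge0 (a : R[i]) : 0 <= nrm2 a.
Proof. rewrite /nrm2; nra. Qed.

Lemma nrmZ (a : R[i]) x : nrm (a *: x) = Num.sqrt (nrm2 a) * nrm x.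
Proof.
rewrite /hnorm ipZl ipZr mulrA nrm2_conj RcCM sqrtrM //; exact: nrm2_ge0.
Qed.

Lemma nrm2C (r : R) : nrm2 (r%:C) = r ^+ 2.
Proof. by rewrite /nrm2 /= expr0n /= addr0. Qed.

Lemma nrmZr (r : R) x : nrm (r%:C *: x) = `|r| * nrm x.
Proof. by rewrite nrmZ nrm2C sqrtr_sqr. Qed.

Lemma nrmN x : nrm (- x) = nrm x.
Proof.
have -> : - x = (-1)%:C *: x by rewrite rmorphN1 scaleN1r.
by rewrite nrmZr normrN normr1 mul1r.
Qed.

Lemma nrmB_sym x y : nrm (x - y) = nrm (y - x).
Proof. by rewrite -nrmN opprB. Qed.

Lemma nrm0 : nrm 0 = 0.
Proof. by rewrite /hnorm ip0l sqrtr0. Qed.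

Lemma nrm_eq0 x : nrm x = 0 -> x = 0.
Proof.
move=> H. case: hH => _ _ _ D _. apply: D. apply: cplx_eq; last by rewrite ipxx_Ic.
by rewrite -nrm_sq H expr0n.
Qed.

Lemma small_eq0 x : (forall e : R, 0 < e -> nrm x <= e) -> x = 0.
Proof.
move=> H; apply: nrm_eq0; apply/eqP; rewrite eq_le nrm_ge0 andbT.
rewrite leNgt; apply/negP => h.
have := H (nrm x / 2); lra.
Qed.

Lemma nrmB_tri x y z : nrm (x - z) <= nrm (x - y) + nrm (y - z).
Proof. by have := nrm_triangle (x - y) (y - z); rewrite addrA subrK. Qed.

Definition conv (u : nat -> V) (l : V) :=
  forall e : R, 0 < e -> exists N : nat, forall n : nat, (N <= n)%N -> nrm (u n - l) < e.

Lemma conv_uniq u l l' : conv u l -> conv u l' -> l = l'.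
Proof.
move=> H1 H2. apply/eqP; rewrite -subr_eq0; apply/eqP; apply: small_eq0 => e e0.
have e2 : 0 < e / 2 by lra.
case: (H1 _ e2) => N1 h1. case: (H2 _ e2) => N2 h2.
have := h1 (maxn N1 N2) (leq_maxl _ _). have := h2 (maxn N1 N2) (leq_maxr _ _).
have := nrmB_tri l (u (maxn N1 N2)) l'. rewrite (nrmB_sym l (u _)). lra.
Qed.

Lemma conv_le u l w b N : conv u l -> (forall n, (N <= n)%N -> nrm (u n - w) <= b) ->
  nrm (l - w) <= b.
Proof.
move=> H hb. apply/ler_addgt0Pr => e e0.
case: (H _ e0) => N1 h1. have := h1 (maxn N N1) (leq_maxr _ _).
have := hb (maxn N N1) (leq_maxl _ _). have := nrmB_tri l (u (maxn N N1)) w.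
rewrite (nrmB_sym l (u _)). lra.
Qed.

Lemma conv_add u v l m : conv u l -> conv v m -> conv (fun n => u n + v n) (l + m).
Proof.
move=> H1 H2 e e0. have e2 : 0 < e / 2 by lra.
case: (H1 _ e2) => N1 h1. case: (H2 _ e2) => N2 h2. exists (maxn N1 N2) => n hn.
have := h1 n (leq_trans (leq_maxl _ _) hn). have := h2 n (leq_trans (leq_maxr _ _) hn).
have := nrm_triangle (u n - l) (v n - m).
have -> : u n - l + (v n - m) = u n + v n - (l + m) by rewrite opprD addrACA.
lra.
Qed.

Lemma conv_scale a u l : conv u l -> conv (fun n => a *: u n) (a *: l).
Proof.
move=> H e e0. set s := Num.sqrt (nrm2 a).
have s0 : 0 <= s := sqrtr_ge0 _.
case: (H (e / (s + 1))) => [|N h]; first by apply: divr_gt0; lra.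
exists N => n hn. rewrite -scalerBr nrmZ -/s.
have := h n hn. have := nrm_ge0 (u n - l).
move=> h1 h2. rewrite ltr_pdivlMr in h2; last lra. nra.
Qed.

Lemma conv_const l : conv (fun _ => l) l.
Proof. by move=> e e0; exists 0%N => n _; rewrite subrr nrm0. Qed.

Lemma conv_ext u v l : (forall n, u n = v n) -> conv u l -> conv v l.
Proof. move=> E H e e0; case: (H e e0) => N h; exists N => n hn; rewrite -E; exact: h. Qed.

Lemma conv_shift u l k : conv u l -> conv (fun n => u (n + k)%N) l.
Proof. move=> H e e0; case: (H e e0) => N h; exists N => n hn; apply: h; exact: leq_trans hn (leq_addr _ _). Qed.

Lemma conv_sub u v l m : conv u l -> conv v m -> conv (fun n => u n - v n) (l - m).
Proof.
move=> H1 H2. have := conv_add H1 (conv_scale (-1) H2). rewrite scaleN1r => H.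
apply: conv_ext H => n /=. by rewrite scaleN1r.
Qed.

Lemma conv_cauchy u : (forall e : R, 0 < e -> exists N : nat, forall m n : nat,
   (N <= m)%N -> (N <= n)%N -> nrm (u m - u n) < e) -> exists l, conv u l.
Proof. by case: hH => _ _ _ _ C /C. Qed.


Definition linop (T : V -> V) := forall (a : R[i]) x y, T (a *: x + y) = a *: T x + T y.

Section Lin.
Variable T : V -> V.
Hypothesis hT : linop T.
Lemma T0 : T 0 = 0.
Proof. have := hT 1 0 0. rewrite scaler0 addr0 scale1r => H.
by have := congr1 (fun t => t - T 0) H; rewrite addrK subrr. Qed.
Lemma TD x y : T (x + y) = T x + T y.
Proof. by have := hT 1 x y; rewrite !scale1r. Qed.
Lemma TZ a x : T (a *: x) = a *: T x.
Proof. by rewrite -[a *: x]addr0 hT T0 addr0. Qed.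
Lemma TN x : T (- x) = - T x.
Proof. by rewrite -scaleN1r TZ scaleN1r. Qed.
Lemma TB x y : T (x - y) = T x - T y.
Proof. by rewrite TD TN. Qed.
End Lin.

Definition opb (T : V -> V) (M : R) := 0 <= M /\ forall x, nrm (T x) <= M * nrm x.

Lemma bounded_lin T : bounded_op ip T -> linop T.
Proof. by case. Qed.

Lemma bounded_opb T : bounded_op ip T -> exists M, opb T M.
Proof.
case=> _ [M HM]. exists (Num.max M 0); split; first by rewrite le_max lexx orbT.
move=> x. apply: le_trans (HM x) _. apply: ler_wpM2r; first exact: nrm_ge0.
by rewrite le_max lexx.
Qed.

Lemma bounded_of T M : linop T -> opb T M -> bounded_op ip T.
Proof. by move=> L [_ B]; split => //; exists M. Qed.

Lemma opb_le T M M' : M <= M' -> opb T M -> opb T M'.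
Proof.
move=> le [h0 h]; split; first lra.
move=> x; apply: le_trans (h x) _; apply: ler_wpM2r => //; exact: nrm_ge0.
Qed.

Lemma linop_ext T T' : (forall x, T x = T' x) -> linop T -> linop T'.
Proof. by move=> E L a x y; rewrite -!E. Qed.
Lemma opb_ext T T' M : (forall x, T x = T' x) -> opb T M -> opb T' M.
Proof. by move=> E [h0 h]; split => // x; rewrite -E. Qed.
Lemma bounded_ext T T' : (forall x, T x = T' x) -> bounded_op ip T -> bounded_op ip T'.
Proof.
move=> E B. case: (bounded_opb B) => M HM.
apply: (bounded_of (linop_ext E (bounded_lin B))); exact: opb_ext HM.
Qed.
Lemma positive_ext T T' : (forall x, T x = T' x) -> positive_op ip T -> positive_op ip T'.
Proof. move=> E [B P]; split; first exact: bounded_ext B. by move=> x; rewrite -E. Qed.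

Lemma linop_comp T S : linop T -> linop S -> linop (fun x => T (S x)).
Proof. by move=> LT LS a x y; rewrite LS LT. Qed.
Lemma opb_comp T S M N : opb T M -> opb S N -> opb (fun x => T (S x)) (M * N).
Proof.
move=> [m0 hT] [n0 hS]; split; first exact: mulr_ge0.
move=> x; apply: le_trans (hT _) _; rewrite -mulrA; apply: ler_wpM2l => //.
Qed.
Lemma linop_add T S : linop T -> linop S -> linop (fun x => T x + S x).
Proof. move=> LT LS a x y; rewrite LT LS scalerDr; by rewrite addrACA. Qed.
Lemma opb_add T S M N : opb T M -> opb S N -> opb (fun x => T x + S x) (M + N).
Proof.
move=> [m0 hT] [n0 hS]; split; first exact: addr_ge0.
move=> x; apply: le_trans (nrm_triangle _ _) _; rewrite mulrDl; exact: lerD.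
Qed.
Lemma linop_sub T S : linop T -> linop S -> linop (fun x => T x - S x).
Proof. move=> LT LS a x y; rewrite LT LS scalerBr; by rewrite opprD addrACA. Qed.
Lemma opb_sub T S M N : opb T M -> opb S N -> opb (fun x => T x - S x) (M + N).
Proof.
move=> [m0 hT] [n0 hS]; split; first exact: addr_ge0.
move=> x; apply: le_trans (nrm_triangle _ _) _; rewrite mulrDl nrmN; exact: lerD.
Qed.
Lemma linop_id : linop id. Proof. by []. Qed.
Lemma opb_id : opb id 1. Proof. by split => // x; rewrite mul1r. Qed.
Lemma linop_scale c T : linop T -> linop (fun x => c *: T x).
Proof. by move=> L a x y; rewrite L scalerDr !scalerA mulrC. Qed.
Lemma opb_scale (r : R) T M : opb T M -> opb (fun x => r%:C *: T x) (`|r| * M).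
Proof.
move=> [m0 h]; split; first by rewrite mulr_ge0.
move=> x; rewrite nrmZr -mulrA; apply: ler_wpM2l => //.
Qed.

Lemma bounded_comp T S : bounded_op ip T -> bounded_op ip S -> bounded_op ip (fun x => T (S x)).
Proof.
move=> BT BS. case: (bounded_opb BT) => M HM; case: (bounded_opb BS) => N HN.
apply: (bounded_of (linop_comp (bounded_lin BT) (bounded_lin BS))). exact: opb_comp HM HN.
Qed.
Lemma bounded_add T S : bounded_op ip T -> bounded_op ip S -> bounded_op ip (fun x => T x + S x).
Proof.
move=> BT BS. case: (bounded_opb BT) => M HM; case: (bounded_opb BS) => N HN.
apply: (bounded_of (linop_add (bounded_lin BT) (bounded_lin BS))). exact: opb_add HM HN.
Qed.
Lemma bounded_sub T S : bounded_op ip T -> bounded_op ip S -> bounded_op ip (fun x => T x - S x).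
Proof.
move=> BT BS. case: (bounded_opb BT) => M HM; case: (bounded_opb BS) => N HN.
apply: (bounded_of (linop_sub (bounded_lin BT) (bounded_lin BS))). exact: opb_sub HM HN.
Qed.

Definition psd (T : V -> V) := forall x, 0 <= ip (T x) x.

Lemma psd_of T : (forall x, Ic (ip (T x) x) = 0) -> (forall x, 0 <= Rc (ip (T x) x)) -> psd T.
Proof. by move=> h1 h2 x; rewrite cplx_ge0 h1 eqxx h2. Qed.

Lemma psd_Ic T x : psd T -> Ic (ip (T x) x) = 0.
Proof. by move=> /(_ x); rewrite cplx_ge0 => /andP[/eqP]. Qed.
Lemma psd_Rc T x : psd T -> 0 <= Rc (ip (T x) x).
Proof. by move=> /(_ x); rewrite cplx_ge0 => /andP[]. Qed.

Lemma psd_add T S : psd T -> psd S -> psd (fun x => T x + S x).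
Proof. move=> h1 h2; apply: psd_of => x; rewrite ipDl ?IcD ?RcD.
  by rewrite (psd_Ic _ h1) (psd_Ic _ h2) addr0.
have := psd_Rc x h1; have := psd_Rc x h2; lra. Qed.

Lemma positive_add T S : positive_op ip T -> positive_op ip S -> positive_op ip (fun x => T x + S x).
Proof. move=> [B1 P1] [B2 P2]; split; [exact: bounded_add | exact: psd_add]. Qed.

Definition selfadj (T : V -> V) := forall x y, ip (T x) y = ip x (T y).

Lemma psd_selfadj T : linop T -> psd T -> selfadj T.
Proof.
move=> L P x y.
set a := ip (T x) y. set b := ip (T y) x.
have h1 := psd_Ic (x + y) P.
rewrite TD // ipDl !ipDr !IcD (psd_Ic _ P) (psd_Ic _ P) add0r addr0 -/a -/b in h1.
have h2 := psd_Ic (x + 'i *: y) P.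
rewrite TD // TZ // ipDl !ipDr !ipZl !ipZr !IcD (psd_Ic _ P) -/a -/b in h2.
rewrite !IcM !RcM !RcJ !IcJ /= (psd_Ic _ P) in h2.
rewrite (ipsym (T y) x) -/b. apply: cplx_eq; rewrite ?RcJ ?IcJ.
  move: h2. set p := Rc (ip (T y) y). set q := Ic (ip (T y) y). lra.
lra.
Qed.

Lemma positive_selfadj T : positive_op ip T -> selfadj T.
Proof. case=> [[L _] P]; exact: psd_selfadj. Qed.

Lemma positive_semi T : positive_op ip T -> semiip (fun x y => ip (T x) y).
Proof.
move=> hT. have SA := positive_selfadj hT. case: hT => [[L _] P].
split => //.
- by move=> a x y z; rewrite L ipDl ipZl.
- by move=> x y; rewrite SA ipsym.
Qed.

Lemma form_bound T C x : positive_op ip T -> 0 <= C ->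
  (forall z, Rc (ip (T z) z) <= C * nrm z ^+ 2) -> nrm (T x) <= C * nrm x.
Proof.
move=> hT C0 hC. have F := positive_semi hT.
have := CS_gen F x (T x). rewrite /= -/(nrm2 _).
have -> : ip (T x) (T x) = (nrm (T x) ^+ 2)%:C.
  by apply: cplx_eq; rewrite ?nrm_sq // ipxx_Ic.
rewrite nrm2C => H.
have h1 := hC x. have h2 := hC (T x).
have q0 : 0 <= Rc (ip (T x) x) by case: hT => _ P; exact: psd_Rc.
have n0 := nrm_ge0 (T x). have m0 := nrm_ge0 x.
apply: sq_le_bound; last by rewrite mulr_ge0.
have [nz|np] := eqVneq (nrm (T x)) 0; first by rewrite nz expr0n /=; nra.
have npos : 0 < nrm (T x) by rewrite lt_def np n0.
have H2 : nrm (T x) ^+ 2 ^+ 2 <= C * nrm x ^+ 2 * (C * nrm (T x) ^+ 2).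
  apply: le_trans H _. apply: ler_pM => //; case: hT => _ Pp; exact: psd_Rc.
have p2 : 0 < nrm (T x) ^+ 2 by rewrite exprn_gt0.
rewrite exprMn. nra.
Qed.

Lemma Rc_le_bound T C z : opb T C -> Rc (ip (T z) z) <= C * nrm z ^+ 2.
Proof.
move=> [c0 h]. apply: le_trans (Rc_ip_le _ _) _. rewrite expr2 mulrA.
apply: ler_wpM2r; [exact: nrm_ge0 | exact: h].
Qed.

Lemma pos_sq_bound T C x : positive_op ip T -> opb T C ->
  nrm (T x) ^+ 2 <= C * Rc (ip (T x) x).
Proof.
move=> hT hC. have F := positive_semi hT.
have := CS_gen F x (T x). rewrite /= -/(nrm2 _).
have -> : ip (T x) (T x) = (nrm (T x) ^+ 2)%:C.
  by apply: cplx_eq; rewrite ?nrm_sq // ipxx_Ic.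
rewrite nrm2C => H.
have h2 := Rc_le_bound (T x) hC. case: hC => C0 _.
have q0 : 0 <= Rc (ip (T x) x) by case: hT => _ P; exact: psd_Rc.
have n0 := nrm_ge0 (T x).
have [nz|np] := eqVneq (nrm (T x)) 0; first by rewrite nz expr0n /=; nra.
have p2 : 0 < nrm (T x) ^+ 2 by rewrite exprn_gt0 // lt_def np n0.
have H2 : nrm (T x) ^+ 2 ^+ 2 <= Rc (ip (T x) x) * (C * nrm (T x) ^+ 2).
  apply: le_trans H _. apply: ler_wpM2l => //.
nra.
Qed.

Lemma dominate D E C : positive_op ip D -> psd (fun x => E x - D x) -> opb E C -> opb D C.
Proof.
move=> hD hED hE. have C0 : 0 <= C by case: hE.
split => // x. apply: form_bound => // z.
apply: le_trans (Rc_le_bound z hE). have := psd_Rc z hED. rewrite ipBl RcB. lra.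
Qed.

Section Proj.
Variable P : V -> V.
Hypothesis hP : orth_proj ip P.
Lemma P_lin : linop P. Proof. by case: hP => [[L _] _ _]. Qed.
Lemma P_idem x : P (P x) = P x. Proof. by case: hP. Qed.
Lemma P_sa : selfadj P. Proof. by case: hP. Qed.
Lemma P_bounded : bounded_op ip P. Proof. by case: hP. Qed.
Lemma PQ0 x : P (x - P x) = 0.
Proof. by rewrite (TB P_lin) P_idem subrr. Qed.
Lemma ipPQ x y : ip (P x) (y - P y) = 0.
Proof. by rewrite P_sa PQ0 ip0r. Qed.
Lemma ipQP x y : ip (x - P x) (P y) = 0.
Proof. by rewrite -P_sa PQ0 ip0l. Qed.
Lemma ipQ x : ip (x - P x) x = (nrm (x - P x) ^+ 2)%:C.
Proof.
have -> : ip (x - P x) x = ip (x - P x) (x - P x) by rewrite ipBr ipQP subr0.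
by apply: cplx_eq; rewrite ?nrm_sq // ipxx_Ic.
Qed.
Lemma ipP x : ip (P x) x = (nrm (P x) ^+ 2)%:C.
Proof.
have -> : ip (P x) x = ip (P x) (P x).
  by rewrite -{2}(subrK (P x) x) ipDr ipPQ add0r.
by apply: cplx_eq; rewrite ?nrm_sq // ipxx_Ic.
Qed.
Lemma nrm_split x : nrm x ^+ 2 = nrm (P x) ^+ 2 + nrm (x - P x) ^+ 2.
Proof.
have E : x = (x - P x) + P x by rewrite subrK.
rewrite nrm_sq {1 2}E ipDl !(ipDr (x - P x) (P x)) ipQP ipPQ addr0 add0r !RcD -!nrm_sq.
by rewrite addrC.
Qed.
Lemma nrmP_le x : nrm (P x) <= nrm x.
Proof.
apply: sq_le_bound; last exact: nrm_ge0. rewrite (nrm_split x).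
have := sqr_ge0 (nrm (x - P x)). lra.
Qed.
Lemma nrmQ_le x : nrm (x - P x) <= nrm x.
Proof.
apply: sq_le_bound; last exact: nrm_ge0. rewrite (nrm_split x).
have := sqr_ge0 (nrm (P x)). lra.
Qed.
End Proj.


Lemma conv_op T M u l : opb T M -> linop T -> conv u l -> conv (fun n => T (u n)) (T l).
Proof.
move=> [m0 hT] L H e e0. case: (H (e / (M + 1))) => [|N h]; first by apply: divr_gt0; lra.
exists N => n hn. rewrite -(TB L). apply: le_lt_trans (hT _) _.
have := h n hn. have := nrm_ge0 (u n - l). move=> h1 h2.
rewrite ltr_pdivlMr in h2; last lra. nra.
Qed.

Lemma conv_dom u l v m (c : R) : 0 <= c -> conv u l ->
  (forall n, nrm (v n - m) <= c * nrm (u n - l)) -> conv v m.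
Proof.
move=> c0 H hb e e0. case: (H (e / (c + 1))) => [|N h]; first by apply: divr_gt0; lra.
exists N => n hn. apply: le_lt_trans (hb n) _.
have := h n hn. have := nrm_ge0 (u n - l). move=> h1 h2.
rewrite ltr_pdivlMr in h2; last lra. nra.
Qed.

Lemma selfadj_Ic T x : selfadj T -> Ic (ip (T x) x) = 0.
Proof. move=> SA. have := SA x x. rewrite (ipsym (T x) x) => E.
have := congr1 Ic E. rewrite IcJ. lra. Qed.

Fixpoint ak (k : nat) : R := if k is k'.+1 then (1 + ak k' ^+ 2) / 2 else 0.

Lemma ak_bounds k : 0 <= ak k <= 1.
Proof.
elim: k => [|k /andP[h1 h2]] /=; first by rewrite lexx ler01.
apply/andP; split; nra.
Qed.
Lemma ak_ge0 k : 0 <= ak k. Proof. by case/andP: (ak_bounds k). Qed.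
Lemma ak_le1 k : ak k <= 1. Proof. by case/andP: (ak_bounds k). Qed.
Lemma ak_incr k : ak k <= ak k.+1.
Proof. rewrite /=. have := sqr_ge0 (1 - ak k). nra. Qed.
Lemma ak_mono k m : (k <= m)%N -> ak k <= ak m.
Proof.
move=> /subnKC <-. elim: (m - k)%N => [|d IH]; first by rewrite addn0.
by rewrite addnS; apply: le_trans IH (ak_incr _).
Qed.

Lemma ak_rate k : 1 - ak k <= 2 / (k.+1)%:R.
Proof.
elim: k => [|k IH]; first by rewrite /= subr0 divr1 ler1n.
rewrite /=. set e := 1 - ak k in IH *.
have e0 : 0 <= e by have := ak_le1 k; rewrite /e; lra.
have e1 : e <= 1 by have := ak_ge0 k; rewrite /e; lra.
have -> : 1 - (1 + ak k ^+ 2) / 2 = e - e ^+ 2 / 2 by rewrite /e; field.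
set n : R := (k.+1)%:R in IH *.
have n1 : 1 <= n by rewrite /n ler1n.
have -> : (k.+2)%:R = n + 1 by rewrite /n -natr1.
rewrite ler_pdivlMr in IH; last lra.
rewrite ler_pdivlMr; last lra.
have h : 0 <= (2 - e * n) * (1 - e / 2) by apply: mulr_ge0; lra.
nra.
Qed.

Lemma ak_small e : 0 < e -> exists k, 1 - ak k < e.
Proof.
move=> e0. have [k hk] : exists k : nat, 2 / e < k%:R.
  exists (Num.truncn (2 / e)).+1. exact: Num.Theory.truncnS_gt.
exists k. apply: le_lt_trans (ak_rate k) _.
rewrite ltr_pdivrMr; last by rewrite ltr0n.
rewrite ltr_pdivrMr // in hk.
have : (k%:R : R) <= (k.+1)%:R by rewrite ler_nat.
nra.
Qed.

Lemma zero_of_ak (r c : R) : 0 <= c -> (forall k, `|r| <= c * (1 - ak k)) -> r = 0.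
Proof.
move=> c0 H. apply/eqP; rewrite -normr_eq0; apply/eqP.
apply/eqP; rewrite eq_le normr_ge0 andbT; apply/ler_addgt0Pr => e e0.
case: (ak_small (e := e / (c + 1))) => [|k hk]; first by apply: divr_gt0; lra.
have := H k. rewrite ltr_pdivlMr in hk; last lra.
have := ak_le1 k. nra.
Qed.

Lemma vec_zero_of_ak v (c : R) : 0 <= c -> (forall k, nrm v <= c * (1 - ak k)) -> v = 0.
Proof.
move=> c0 H. apply: nrm_eq0. apply: (@zero_of_ak _ c) => // k.
by rewrite ger0_norm ?nrm_ge0.
Qed.

Local Notation half := ((2^-1 : R)%:C).

Fixpoint Yk (B : V -> V) (k : nat) : V -> V :=
  if k is k'.+1 then fun x => half *: (B x + Yk B k' (Yk B k' x)) else fun _ => 0.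

Definition Ylim (B : V -> V) (x : V) : V :=
  epsilon (inhabits 0) (fun l => conv (fun k => Yk B k x) l).

Definition Root (B : V -> V) (x : V) : V := x - Ylim B x.

Definition goodB (B : V -> V) := [/\ linop B, selfadj B & opb B 1].

Lemma nrm_half v : nrm (half *: v) = nrm v / 2.
Proof. rewrite nrmZr ger0_norm ?invr_ge0 ?ler0n //. by rewrite mulrC. Qed.

Lemma conj_real (r : R) : (r%:C)^* = r%:C.
Proof. by apply: cplx_eq; rewrite ?RcJ ?IcJ //= oppr0. Qed.

Section YB.
Variable B : V -> V.
Hypothesis hB : goodB B.
Let BL : linop B. Proof. by case: hB. Qed.
Let BS : selfadj B. Proof. by case: hB. Qed.
Let Bb : opb B 1. Proof. by case: hB. Qed.

Lemma Yk_lin k : linop (Yk B k).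
Proof.
elim: k => [|k IH] /=; first by move=> a x y; rewrite scaler0 addr0.
apply: linop_scale; apply: linop_add => //; exact: linop_comp.
Qed.

Lemma Yk_sa k : selfadj (Yk B k).
Proof.
elim: k => [|k IH] /= x y; first by rewrite ip0l ip0r.
by rewrite ipZl ipZr conj_real ipDl ipDr BS IH IH.
Qed.

Lemma Yk_opb k : opb (Yk B k) (ak k).
Proof.
split; first exact: ak_ge0.
elim: k => [|k IH] x /=; first by rewrite nrm0 mul0r.
rewrite nrm_half. have h1 := nrm_triangle (B x) (Yk B k (Yk B k x)).
have h2 : nrm (B x) <= nrm x by case: Bb => _ /(_ x); rewrite mul1r.
have h3 := IH (Yk B k x). have h4 := IH x.
have a0 := ak_ge0 k.
have h5 : nrm (Yk B k (Yk B k x)) <= ak k ^+ 2 * nrm x.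
  apply: le_trans h3 _. rewrite expr2 -mulrA. exact: ler_wpM2l.
have := nrm_ge0 x. nra.
Qed.

Lemma Yk_diff k m x : (k <= m)%N -> nrm (Yk B m x - Yk B k x) <= (ak m - ak k) * nrm x.
Proof.
elim: k m x => [|k IH] m x hkm.
  by rewrite /= subr0 subr0; case: (Yk_opb m) => _ /(_ x).
case: m hkm => // m; rewrite ltnS => hkm.
rewrite /= -scalerBr nrm_half.
have -> : B x + Yk B m (Yk B m x) - (B x + Yk B k (Yk B k x)) =
  Yk B m (Yk B m x - Yk B k x) + (Yk B m (Yk B k x) - Yk B k (Yk B k x)).
  by rewrite (TB (Yk_lin m)) opprD addrACA subrr add0r addrA subrK.
have h1 := nrm_triangle (Yk B m (Yk B m x - Yk B k x)) (Yk B m (Yk B k x) - Yk B k (Yk B k x)).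
have h2 : nrm (Yk B m (Yk B m x - Yk B k x)) <= ak m * ((ak m - ak k) * nrm x).
  apply: le_trans (proj2 (Yk_opb m) _) _. apply: ler_wpM2l; [exact: ak_ge0 | exact: IH].
have h3 := IH m (Yk B k x) hkm.
have h4 : nrm (Yk B k x) <= ak k * nrm x by case: (Yk_opb k) => _ /(_ x).
have d0 : 0 <= ak m - ak k by have := ak_mono hkm; lra.
have h5 : (ak m - ak k) * nrm (Yk B k x) <= (ak m - ak k) * (ak k * nrm x).
  exact: ler_wpM2l.
rewrite /=. have := nrm_ge0 x. have := ak_ge0 k. nra.
Qed.

Lemma Yk_cauchy x : exists l, conv (fun k => Yk B k x) l.
Proof.
apply: conv_cauchy => e e0.
case: (ak_small (e := e / (nrm x + 1))) => [|N hN]; first by apply: divr_gt0 => //; have := nrm_ge0 x; lra.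
exists N => m n hm hn.
have nx := nrm_ge0 x.
rewrite ltr_pdivlMr in hN; last lra.
wlog le : m n hm hn / (n <= m)%N.
  move=> W. case: (leqP n m) => h; first exact: W.
  rewrite nrmB_sym; apply: W => //; exact: ltnW.
apply: le_lt_trans (Yk_diff x le) _.
have := ak_mono hn. have := ak_le1 m. nra.
Qed.

Lemma Ylim_conv x : conv (fun k => Yk B k x) (Ylim B x).
Proof. rewrite /Ylim. case: (Yk_cauchy x) => l hl. exact: (epsilon_spec (inhabits 0) _ (ex_intro _ l hl)). Qed.

Lemma Ylim_near k x : nrm (Ylim B x - Yk B k x) <= (1 - ak k) * nrm x.
Proof.
apply: (conv_le (Ylim_conv x) (N := k)) => n hn.
apply: le_trans (Yk_diff x hn) _. apply: ler_wpM2r; first exact: nrm_ge0.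
have := ak_le1 n; lra.
Qed.

Lemma Ylim_lin : linop (Ylim B).
Proof.
move=> a x y. apply: (conv_uniq (Ylim_conv (a *: x + y))).
apply: conv_ext (conv_add (conv_scale a (Ylim_conv x)) (Ylim_conv y)) => n /=.
by rewrite (Yk_lin n).
Qed.

Lemma Ylim_opb : opb (Ylim B) 1.
Proof.
split => // x. rewrite mul1r -[Ylim B x]subr0.
apply: (conv_le (Ylim_conv x) (N := 0)) => n _.
rewrite subr0. apply: le_trans (proj2 (Yk_opb n) x) _.
have := ak_le1 n; have := nrm_ge0 x; nra.
Qed.

Lemma Ylim_sa : selfadj (Ylim B).
Proof.
move=> x y. apply/eqP; rewrite -subr_eq0; apply/eqP.
have K : forall k, ip (Ylim B x) y - ip x (Ylim B y) =
   ip (Ylim B x - Yk B k x) y - ip x (Ylim B y - Yk B k y).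
  move=> k. rewrite ipBl ipBr Yk_sa. rewrite opprB addrA subrK. by [].
set c := 2 * (nrm x * nrm y).
have c0 : 0 <= c by rewrite /c mulr_ge0 ?mulr_ge0 ?nrm_ge0.
have nx := nrm_ge0 x. have ny := nrm_ge0 y.
apply: cplx_eq; apply: (@zero_of_ak _ c) => // k; rewrite (K k) ?RcB ?IcB.
- have h1 := Rc_ip_le (Ylim B x - Yk B k x) y. have h2 := Rc_ip_ge (Ylim B x - Yk B k x) y.
  have h3 := Rc_ip_le x (Ylim B y - Yk B k y). have h4 := Rc_ip_ge x (Ylim B y - Yk B k y).
  have h5 := Ylim_near k x. have h6 := Ylim_near k y.
  have e0 : 0 <= 1 - ak k by have := ak_le1 k; lra.
  have h7 : nrm (Ylim B x - Yk B k x) * nrm y <= (1 - ak k) * nrm x * nrm y by apply: ler_wpM2r.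
  have h8 : nrm x * nrm (Ylim B y - Yk B k y) <= nrm x * ((1 - ak k) * nrm y) by apply: ler_wpM2l.
  rewrite /c. apply/ler_normlP; split; nra.
- have h1 := Ic_ip_le (Ylim B x - Yk B k x) y. have h2 := Ic_ip_ge (Ylim B x - Yk B k x) y.
  have h3 := Ic_ip_le x (Ylim B y - Yk B k y). have h4 := Ic_ip_ge x (Ylim B y - Yk B k y).
  have h5 := Ylim_near k x. have h6 := Ylim_near k y.
  have e0 : 0 <= 1 - ak k by have := ak_le1 k; lra.
  have h7 : nrm (Ylim B x - Yk B k x) * nrm y <= (1 - ak k) * nrm x * nrm y by apply: ler_wpM2r.
  have h8 : nrm x * nrm (Ylim B y - Yk B k y) <= nrm x * ((1 - ak k) * nrm y) by apply: ler_wpM2l.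
  rewrite /c. apply/ler_normlP; split; nra.
Qed.

Lemma half_twice (v : V) : half *: v + half *: v = v.
Proof.
rewrite -scalerDl -rmorphD. have -> : (2^-1 + 2^-1 : R) = 1 by field.
by rewrite rmorph1 scale1r.
Qed.

Lemma Ylim_sq x : Ylim B (Ylim B x) = Ylim B x + Ylim B x - B x.
Proof.
apply/eqP; rewrite -subr_eq0; apply/eqP.
have nx := nrm_ge0 x.
apply: (@vec_zero_of_ak _ (4 * nrm x)); first lra.
move=> k.
set p := Ylim B (Ylim B x). set s := Ylim B x. set q := Yk B k s.
set r := Yk B k (Yk B k x). set w := Yk B k.+1 x. set t := s + s - B x.
have hw : w + w = B x + r by rewrite /w /= half_twice.
have hr : r = (w + w) - B x by rewrite hw [B x + r]addrC addrK.
have t1 := nrmB_tri p q t. have t2 := nrmB_tri q r t.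
have e0 : 0 <= 1 - ak k by have := ak_le1 k; lra.
have ns : nrm s <= nrm x by have := proj2 Ylim_opb x; rewrite mul1r.
have b1 : nrm (p - q) <= (1 - ak k) * nrm x.
  apply: le_trans (Ylim_near k s) _. exact: ler_wpM2l.
have b2 : nrm (q - r) <= (1 - ak k) * nrm x.
  rewrite /q /r -(TB (Yk_lin k)). apply: le_trans (proj2 (Yk_opb k) _) _.
  have := Ylim_near k x. rewrite -/s => h. have := ak_le1 k. have := ak_ge0 k.
  have := nrm_ge0 (s - Yk B k x). nra.
have b3 : nrm (r - t) <= 2 * ((1 - ak k) * nrm x).
  have -> : r - t = (w - s) + (w - s).
    by rewrite hr /t opprB addrA subrK opprD addrACA.
  apply: le_trans (nrm_triangle _ _) _. rewrite nrmB_sym.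
  have := Ylim_near k.+1 x. rewrite -/s -/w => h.
  have := ak_incr k. have := nrm_ge0 x. nra.
lra.
Qed.

Lemma Root_lin : linop (Root B).
Proof. apply: linop_sub; [exact: linop_id | exact: Ylim_lin]. Qed.

Lemma Root_opb : opb (Root B) 2.
Proof.
have := opb_sub opb_id Ylim_opb. have -> : (1 + 1 : R) = 2 by [].
by apply: opb_ext.
Qed.

Lemma Root_sq x : Root B (Root B x) = x - B x.
Proof.
rewrite /Root (TB Ylim_lin) Ylim_sq.
set y := Ylim B x.
have G : forall (u v c : V), u - v - (v - (v + v - c)) = u - c.
  by move=> u v c; rewrite opprB (addrAC v v) addrK addrA subrK.
exact: G.
Qed.

Lemma Root_sa : selfadj (Root B).
Proof. by move=> x y; rewrite /Root ipBl ipBr Ylim_sa. Qed.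

Lemma Root_pos : positive_op ip (Root B).
Proof.
split; first exact: (bounded_of Root_lin Root_opb).
apply: psd_of => x; rewrite /Root ipBl.
  by rewrite IcB ipxx_Ic (selfadj_Ic _ Ylim_sa) subr0.
rewrite RcB -nrm_sq. have := Rc_ip_le (Ylim B x) x.
have := proj2 Ylim_opb x. rewrite mul1r. have := nrm_ge0 x.
have := nrm_ge0 (Ylim B x). nra.
Qed.

End YB.



Lemma subKr' (x y : V) : x - (x - y) = y.
Proof. by rewrite opprB addrC subrK. Qed.

Definition Bof (T : V -> V) := fun x => x - T x.

Lemma goodB_of T : positive_op ip T -> opb T 1 -> goodB (Bof T).
Proof.
move=> hT hb. have LT : linop T by case: hT => [[]].
have SA := positive_selfadj hT.
have LB : linop (Bof T) by apply: linop_sub => //; exact: linop_id.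
split => //.
- by move=> x y; rewrite /Bof ipBl ipBr SA.
- apply: (@dominate _ id) => //; last exact: opb_id.
  + split; first by apply: (bounded_of LB); apply: opb_sub opb_id hb.
    apply: psd_of => x; rewrite /Bof ipBl.
      by rewrite IcB ipxx_Ic (psd_Ic _ (proj2 hT)) subr0.
    rewrite RcB -nrm_sq. have := Rc_ip_le (T x) x.
    have := proj2 hb x. rewrite mul1r. have := nrm_ge0 x.
    have := nrm_ge0 (T x). nra.
  + move=> x /=. rewrite /Bof subKr'. exact: (proj2 hT).
Qed.

Lemma nrm_sq_le0 v : nrm v ^+ 2 <= 0 -> v = 0.
Proof.
move=> h; apply: nrm_eq0; apply/eqP; rewrite eq_le nrm_ge0 andbT.
have := nrm_ge0 v. nra.
Qed.

Section Uniq.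
Variables (T S : V -> V).
Hypotheses (hT : positive_op ip T) (hb : opb T 1) (hS : positive_op ip S)
  (hSS : forall x, S (S x) = T x).

Let hB := goodB_of hT hb.
Let LS : linop S. Proof. by case: hS => [[]]. Qed.
Let LT : linop T. Proof. by case: hT => [[]]. Qed.

Lemma S_B x : S (Bof T x) = Bof T (S x).
Proof. by rewrite /Bof (TB LS) -hSS hSS. Qed.

Lemma S_Yk k x : S (Yk (Bof T) k x) = Yk (Bof T) k (S x).
Proof.
elim: k x => [|k IH] x /=; first exact: (T0 LS).
by rewrite (TZ LS) (TD LS) S_B IH IH.
Qed.

Lemma S_Ylim x : S (Ylim (Bof T) x) = Ylim (Bof T) (S x).
Proof.
case: (bounded_opb (proj1 hS)) => M HM.
apply: (conv_uniq (conv_op HM LS (Ylim_conv hB x))).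
apply: conv_ext (Ylim_conv hB (S x)) => n. by rewrite S_Yk.
Qed.

Lemma S_Root x : S (Root (Bof T) x) = Root (Bof T) (S x).
Proof. by rewrite /Root (TB LS) S_Ylim. Qed.

Lemma root_unique x : S x = Root (Bof T) x.
Proof.
set Rt := Root (Bof T).
have LR : linop Rt := Root_lin hB.
have PR : positive_op ip Rt := Root_pos hB.
have SAS := positive_selfadj hS. have SAR := Root_sa hB.
have K : forall z, S (S z - Rt z) + Rt (S z - Rt z) = 0.
  move=> z. rewrite (TB LS) (TB LR) S_Root hSS /Rt Root_sq // /Bof subKr'.
  by rewrite addrA subrK subrr.
have Z : forall z, S (S z - Rt z) = 0 /\ Rt (S z - Rt z) = 0.
  move=> z. set w := S z - Rt z.
  have ha := psd_Rc w (proj2 hS). have hb' := psd_Rc w (proj2 PR).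
  have hab : Rc (ip (S w) w) + Rc (ip (Rt w) w) = 0.
    by rewrite -RcD -ipDl K ip0l.
  have a0 : Rc (ip (S w) w) = 0 by lra.
  have b0 : Rc (ip (Rt w) w) = 0 by lra.
  case: (bounded_opb (proj1 hS)) => M HM.
  have := pos_sq_bound w hS HM. rewrite a0 mulr0 => h1.
  have := pos_sq_bound w PR (Root_opb hB). rewrite b0 mulr0 => h2.
  by split; apply: nrm_sq_le0.
have DD : forall z, S (S z - Rt z) - Rt (S z - Rt z) = 0.
  by move=> z; case: (Z z) => -> ->; rewrite subr0.
apply/eqP; rewrite -subr_eq0; apply/eqP; apply: nrm_sq_le0.
rewrite nrm_sq.
have -> : ip (S x - Rt x) (S x - Rt x) = ip (S (S x - Rt x) - Rt (S x - Rt x)) x.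
  by rewrite [RHS]ipBl SAS SAR -ipBr.
by rewrite DD ip0l.
Qed.
End Uniq.


Section Cont.
Variables (Tn : nat -> V -> V) (T : V -> V).
Hypotheses (hTn : forall n, positive_op ip (Tn n) /\ opb (Tn n) 1)
  (hT : positive_op ip T /\ opb T 1)
  (hc : forall x, conv (fun n => Tn n x) (T x)).

Let hBn n : goodB (Bof (Tn n)) := goodB_of (proj1 (hTn n)) (proj2 (hTn n)).
Let hB : goodB (Bof T) := goodB_of (proj1 hT) (proj2 hT).

Lemma Bof_cont x : conv (fun n => Bof (Tn n) x) (Bof T x).
Proof. exact: conv_sub (conv_const x) (hc x). Qed.

Lemma Yk_cont k x : conv (fun n => Yk (Bof (Tn n)) k x) (Yk (Bof T) k x).
Proof.
elim: k x => [|k IH] x /=; first exact: conv_const.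
apply: conv_scale. apply: conv_add; first exact: Bof_cont.
have C1 : conv (fun n => Yk (Bof (Tn n)) k (Yk (Bof (Tn n)) k x - Yk (Bof T) k x)) 0.
  apply: (conv_dom (c := 1) _ (IH x)) => // n. rewrite subr0.
  apply: le_trans (proj2 (Yk_opb (hBn n) k) _) _.
  apply: ler_wpM2r; [exact: nrm_ge0 | exact: ak_le1].
have C2 := IH (Yk (Bof T) k x).
have := conv_add C1 C2; rewrite add0r => C3.
apply: conv_ext C3 => n /=.
by rewrite (TB (Yk_lin (hBn n) k)) subrK.
Qed.

Lemma Root_cont x : conv (fun n => Root (Bof (Tn n)) x) (Root (Bof T) x).
Proof.
move=> e e0. have nx := nrm_ge0 x.
have e3 : 0 < e / 3 by lra.
case: (ak_small (e := e / 3 / (nrm x + 1))) => [|k hk]; first by apply: divr_gt0; lra.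
rewrite ltr_pdivlMr in hk; last lra.
have a0 : 0 <= 1 - ak k by have := ak_le1 k; lra.
have small : (1 - ak k) * nrm x < e / 3 by nra.
case: (Yk_cont k x e3) => N hN. exists N => n hn.
have -> : Root (Bof (Tn n)) x - Root (Bof T) x =
  Ylim (Bof T) x - Ylim (Bof (Tn n)) x.
  rewrite /Root. move: (Ylim _ x) (Ylim _ x) => a b.
  by rewrite opprB [LHS]addrC addrA subrK.
have t1 := nrmB_tri (Ylim (Bof T) x) (Yk (Bof T) k x) (Ylim (Bof (Tn n)) x).
have t2 := nrmB_tri (Yk (Bof T) k x) (Yk (Bof (Tn n)) k x) (Ylim (Bof (Tn n)) x).
have b1 := Ylim_near hB k x.
have b2 := hN n hn. rewrite nrmB_sym in b2.
have b3 := Ylim_near (hBn n) k x. rewrite nrmB_sym in b3.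
lra.
Qed.
End Cont.

Definition scl (c : R) (T : V -> V) := fun y => (c^-1)%:C *: T y.
Definition sqrtop (c : R) (T : V -> V) := fun x => (Num.sqrt c)%:C *: Root (Bof (scl c T)) x.

Lemma scl_good T c : positive_op ip T -> 0 < c -> opb T c ->
  positive_op ip (scl c T) /\ opb (scl c T) 1.
Proof.
move=> hT c0 hb. have LT : linop T by case: hT => [[]].
have ob : opb (scl c T) 1.
  have := opb_scale (c^-1) hb. rewrite ger0_norm ?invr_ge0 ?ltW // mulVf ?gt_eqF //.
split => //. split; first by apply: (bounded_of _ ob); exact: linop_scale.
apply: psd_of => x; rewrite /scl ipZl ?IcCM ?RcCM.
  by rewrite (psd_Ic _ (proj2 hT)) mulr0.
apply: mulr_ge0; [by rewrite invr_ge0 ltW | exact: psd_Rc (proj2 hT)].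
Qed.

Lemma sqrtC_sq (c : R) : 0 <= c -> (Num.sqrt c)%:C * (Num.sqrt c)%:C = c%:C.
Proof. by move=> c0; rewrite -rmorphM -expr2 sqr_sqrtr. Qed.

Lemma sqrtop_spec T c : positive_op ip T -> 0 < c -> opb T c ->
  positive_op ip (sqrtop c T) /\ forall x, sqrtop c T (sqrtop c T x) = T x.
Proof.
move=> hT c0 hb. case: (scl_good hT c0 hb) => hT' hb'.
have hB := goodB_of hT' hb'.
have LR := Root_lin hB.
split.
- split; first by apply: (bounded_of (linop_scale _ LR) (opb_scale _ (Root_opb hB))).
  case: (Root_pos hB) => _ P.
  apply: psd_of => x; rewrite /sqrtop ipZl ?IcCM ?RcCM.
    by rewrite (psd_Ic _ P) mulr0.
  apply: mulr_ge0; [exact: sqrtr_ge0 | exact: psd_Rc P].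
- move=> x. rewrite /sqrtop (TZ LR) scalerA sqrtC_sq ?ltW // Root_sq // /Bof subKr' /scl.
  by rewrite scalerA -rmorphM mulfV ?gt_eqF // rmorph1 scale1r.
Qed.

Lemma sqrt_exists T : positive_op ip T -> exists S, positive_op ip S /\ forall x, S (S x) = T x.
Proof.
move=> hT. case: (bounded_opb (proj1 hT)) => M HM.
have c0 : 0 < M + 1 by case: HM => h _; lra.
have hb : opb T (M + 1) by apply: opb_le HM; lra.
exists (sqrtop (M + 1) T). exact: sqrtop_spec.
Qed.

Lemma op_sqrt_spec T : positive_op ip T ->
  positive_op ip (op_sqrt ip T) /\ forall x, op_sqrt ip T (op_sqrt ip T x) = T x.
Proof.
move=> hT. rewrite /op_sqrt. case: (sqrt_exists hT) => S hS.
exact: (epsilon_spec (inhabits id)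
  (fun S0 : V -> V => positive_op ip S0 /\ forall x, S0 (S0 x) = T x) (ex_intro _ S hS)).
Qed.

Lemma sqrt_unique_scaled T c S : positive_op ip T -> 0 < c -> opb T c ->
  positive_op ip S -> (forall x, S (S x) = T x) -> forall x, S x = sqrtop c T x.
Proof.
move=> hT c0 hb hS hSS x.
case: (scl_good hT c0 hb) => hT' hb'.
have LS : linop S by case: hS => [[]].
have sc0 : 0 < Num.sqrt c by rewrite sqrtr_gt0.
set S' := fun y => ((Num.sqrt c)^-1)%:C *: S y.
have hS' : positive_op ip S'.
  split; first by apply: (bounded_ext (T := fun y => ((Num.sqrt c)^-1)%:C *: S y)) => //;
    case: (bounded_opb (proj1 hS)) => M HM;
    apply: (bounded_of (linop_scale _ LS) (opb_scale _ HM)).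
  apply: psd_of => y; rewrite /S' ipZl ?IcCM ?RcCM.
    by rewrite (psd_Ic _ (proj2 hS)) mulr0.
  apply: mulr_ge0; [by rewrite invr_ge0 ltW | exact: psd_Rc (proj2 hS)].
have hSS' : forall y, S' (S' y) = scl c T y.
  move=> y. rewrite /S' (TZ LS) scalerA hSS -rmorphM -invfM -expr2 sqr_sqrtr //; exact: ltW.
have := root_unique hT' hb' hS' hSS' x. rewrite /S' /sqrtop => <-.
by rewrite scalerA -rmorphM mulfV ?gt_eqF // rmorph1 scale1r.
Qed.


Lemma small_real (r : R) : (forall e : R, 0 < e -> `|r| <= e) -> r = 0.
Proof.
move=> H. apply/eqP; rewrite -normr_eq0; apply/eqP; apply/le_anti.
rewrite normr_ge0 andbT; apply/ler_addgt0Pr => e e0; rewrite add0r; exact: H.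
Qed.

Lemma psd_limit (A : nat -> V -> V) (L : V -> V) :
  (forall n, psd (A n)) -> (forall x, conv (fun n => A n x) (L x)) -> psd L.
Proof.
move=> hA hc. have nx := nrm_ge0.
apply: psd_of => x.
- apply: small_real => e e0.
  case: (hc x (e / (nrm x + 1))) => [|N hN]; first by apply: divr_gt0 => //; have := nx x; lra.
  have h := hN N (leqnn N). rewrite ltr_pdivlMr in h; last by have := nx x; lra.
  have E : Ic (ip (L x) x) = - Ic (ip (A N x - L x) x).
    by rewrite ipBl IcB (psd_Ic _ (hA N)) sub0r opprK.
  rewrite E normrN. apply/ler_normlP. have := Ic_ip_le (A N x - L x) x.
  have := Ic_ip_ge (A N x - L x) x. have := nx x. have := nx (A N x - L x). split; nra.
- apply/ler_addgt0Pr => e e0.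
  case: (hc x (e / (nrm x + 1))) => [|N hN]; first by apply: divr_gt0 => //; have := nx x; lra.
  have h := hN N (leqnn N). rewrite ltr_pdivlMr in h; last by have := nx x; lra.
  have E : Rc (ip (L x) x) = Rc (ip (A N x) x) - Rc (ip (A N x - L x) x).
    by rewrite ipBl RcB opprB addrC subrK.
  rewrite E. have := psd_Rc x (hA N). have := Rc_ip_le (A N x - L x) x.
  have := nx x. have := nx (A N x - L x). nra.
Qed.

Section Main.
Variables (PA PB R0 : V -> V).
Hypotheses (hPA : orth_proj ip PA) (hPB : orth_proj ip PB) (hR0 : positive_op ip R0).

Local Notation Rn := (alt_seq ip PA PB R0).
Definition Pn (n : nat) := if odd n then PA else PB.
Local Notation Sn n := (op_sqrt ip (Rn n)).

Lemma Pn_proj n : orth_proj ip (Pn n).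
Proof. by rewrite /Pn; case: (odd n). Qed.

Lemma Rn_succ n x : Rn n.+1 x = Phi ip (Pn n) (Rn n) x.
Proof. by rewrite /= /Pn; case: (odd n). Qed.

Section Step.
Variables (T P : V -> V).
Hypotheses (hT : positive_op ip T) (hP : orth_proj ip P).
Let S := op_sqrt ip T.
Let hS := op_sqrt_spec hT.
Let LS : linop S. Proof. by case: (proj1 hS) => [[]]. Qed.
Let SA : selfadj S := positive_selfadj (proj1 hS).

Lemma Phi_pos : positive_op ip (Phi ip P T).
Proof.
split.
  apply: (bounded_ext (T := fun x => S (S x - P (S x)))) => //.
  apply: bounded_comp; first exact: (proj1 (proj1 hS)).
  apply: bounded_sub; first exact: (proj1 (proj1 hS)).
  apply: bounded_comp; [exact: P_bounded | exact: (proj1 (proj1 hS))].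
move=> x. rewrite /Phi -/S SA ipQ // ler0c. exact: sqr_ge0.
Qed.

Lemma Phi_diff x : T x - Phi ip P T x = S (P (S x)).
Proof. by rewrite /Phi -/S -(proj2 hS x) (TB LS) subKr'. Qed.

Lemma Phi_diff_ip x : ip (T x - Phi ip P T x) x = (nrm (P (S x)) ^+ 2)%:C.
Proof. by rewrite Phi_diff SA ipP. Qed.

Lemma Phi_le : positive_op ip (fun x => T x - Phi ip P T x).
Proof.
split; first by apply: bounded_sub; [exact: (proj1 hT) | exact: (proj1 Phi_pos)].
move=> x. rewrite Phi_diff_ip ler0c. exact: sqr_ge0.
Qed.
End Step.

Lemma Rn_pos n : positive_op ip (Rn n).
Proof.
elim: n => [|n IH] //. apply: (positive_ext (T := Phi ip (Pn n) (Rn n))).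
  by move=> x; rewrite Rn_succ.
exact: Phi_pos (Pn_proj n).
Qed.

Lemma Rn_step n : positive_op ip (fun x => Rn n x - Rn n.+1 x).
Proof.
apply: (positive_ext (T := fun x => Rn n x - Phi ip (Pn n) (Rn n) x)).
  by move=> x; rewrite Rn_succ.
exact: Phi_le (Rn_pos n) (Pn_proj n).
Qed.

Lemma Rn_dec n m : (n <= m)%N -> positive_op ip (fun x => Rn n x - Rn m x).
Proof.
move=> /subnKC <-. elim: (m - n)%N => [|d IH].
  rewrite addn0. split; last by move=> x; rewrite subrr ip0l.
  apply: (bounded_of (M := 0)); first by move=> a x y; rewrite !subrr scaler0 addr0.
  by split => // x; rewrite subrr nrm0 mul0r.
rewrite addnS. apply: (positive_ext (T := fun x => (Rn n x - Rn (n + d)%N x) + (Rn (n + d)%N x - Rn (n + d).+1 x))).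
  by move=> x; rewrite addrA subrK.
exact: positive_add IH (Rn_step _).
Qed.



Section Bnd.
Variable C0 : R.
Hypothesis hC0 : opb R0 C0.

Lemma Rn_bound n : opb (Rn n) C0.
Proof. apply: (dominate (Rn_pos n) _ hC0). exact: (proj2 (Rn_dec (leq0n n))). Qed.

Lemma Rn_diff_bound n m : (n <= m)%N -> opb (fun x => Rn n x - Rn m x) C0.
Proof.
move=> hnm. apply: (dominate (Rn_dec hnm) _ hC0).
move=> x. have -> : R0 x - (Rn n x - Rn m x) = (R0 x - Rn n x) + Rn m x.
  by rewrite opprB addrA addrAC.
by apply: (psd_add (proj2 (Rn_dec (leq0n n))) (proj2 (Rn_pos m))).
Qed.

Definition rr n x := Rc (ip (Rn n x) x).

Lemma rr_dec n x : rr n.+1 x <= rr n x.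
Proof. have := psd_Rc x (proj2 (Rn_step n)). rewrite ipBl RcB /rr. lra. Qed.
Lemma rr_ge0 n x : 0 <= rr n x.
Proof. exact: psd_Rc (proj2 (Rn_pos n)). Qed.

Lemma rr_gap n m x : (n <= m)%N -> nrm (Rn n x - Rn m x) ^+ 2 <= C0 * (rr n x - rr m x).
Proof.
move=> hnm. have := pos_sq_bound x (Rn_dec hnm) (Rn_diff_bound hnm).
by rewrite ipBl RcB.
Qed.

Lemma C0_ge0 : 0 <= C0. Proof. by case: hC0. Qed.

Lemma Rn_cauchy x : exists l, conv (fun n => Rn n x) l.
Proof.
apply: conv_cauchy => e e0.
have c0 := C0_ge0.
have d0 : 0 < e ^+ 2 / (C0 + 1) by apply: divr_gt0; [exact: exprn_gt0 | lra].
case: (decr_cauchy (rr_dec ^~ x) (rr_ge0 ^~ x) d0) => N hN.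
exists N => m n hm hn.
wlog le : m n hm hn / (n <= m)%N.
  move=> W. case: (leqP n m) => h; first exact: W.
  rewrite nrmB_sym; apply: W => //; exact: ltnW.
rewrite nrmB_sym. have g := rr_gap x le.
have h1 := hN m hm. have h2 : rr m x <= rr n x.
  move: le => /subnKC <-. elim: (m - n)%N => [|d IH]; first by rewrite addn0.
  by rewrite addnS; apply: le_trans (rr_dec _ _) IH.
have h3 : rr n x <= rr N x.
  move: hn => /subnKC <-. elim: (n - N)%N => [|d IH]; first by rewrite addn0.
  by rewrite addnS; apply: le_trans (rr_dec _ _) IH.
rewrite ltr_pdivlMr in h1; last lra.
have q : nrm (Rn n x - Rn m x) ^+ 2 < e ^+ 2.
  apply: le_lt_trans g _. have : rr N x - rr m x >= 0 by lra. nra.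
have := nrm_ge0 (Rn n x - Rn m x). nra.
Qed.

Definition Rinf (x : V) : V := epsilon (inhabits 0) (fun l => conv (fun n => Rn n x) l).

Lemma Rinf_conv x : conv (fun n => Rn n x) (Rinf x).
Proof.
rewrite /Rinf. case: (Rn_cauchy x) => l hl.
exact: (epsilon_spec (inhabits 0) (fun l => conv (fun n => Rn n x) l) (ex_intro _ l hl)).
Qed.

Lemma Rinf_lin : linop Rinf.
Proof.
move=> a x y. apply: (conv_uniq (Rinf_conv (a *: x + y))).
apply: conv_ext (conv_add (conv_scale a (Rinf_conv x)) (Rinf_conv y)) => n /=.
by rewrite (bounded_lin (proj1 (Rn_pos n))).
Qed.

Lemma Rinf_opb : opb Rinf C0.
Proof.
split; first exact: C0_ge0.
move=> x. rewrite -[Rinf x]subr0.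
apply: (conv_le (Rinf_conv x) (N := 0)) => n _.
rewrite subr0. exact: (proj2 (Rn_bound n) x).
Qed.

Lemma Rinf_pos : positive_op ip Rinf.
Proof.
split; first exact: bounded_of Rinf_lin Rinf_opb.
apply: (psd_limit (A := Rn)) => [n|]; [exact: (proj2 (Rn_pos n)) | exact: Rinf_conv].
Qed.

Lemma Rinf_le : positive_op ip (fun x => R0 x - Rinf x).
Proof.
split; first by apply: bounded_sub; [exact: (proj1 hR0) | exact: (proj1 Rinf_pos)].
apply: (psd_limit (A := fun n x => R0 x - Rn n x)).
  move=> n; exact: (proj2 (Rn_dec (leq0n n))).
move=> x. exact: conv_sub (conv_const _) (Rinf_conv x).
Qed.

Let c := C0 + 1.
Let c0 : 0 < c. Proof. rewrite /c; have := C0_ge0; lra. Qed.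
Let Rn_c n : opb (Rn n) c. Proof. apply: opb_le (Rn_bound n); rewrite /c; lra. Qed.
Let Rinf_c : opb Rinf c. Proof. apply: opb_le Rinf_opb; rewrite /c; lra. Qed.

Lemma Sn_conv x : conv (fun n => Sn n x) (op_sqrt ip Rinf x).
Proof.
have E1 : forall n y, Sn n y = sqrtop c (Rn n) y.
  move=> n y. have := op_sqrt_spec (Rn_pos n). case=> h1 h2.
  exact: (sqrt_unique_scaled (Rn_pos n) c0 (Rn_c n) h1 h2).
have E2 : forall y, op_sqrt ip Rinf y = sqrtop c Rinf y.
  move=> y. have := op_sqrt_spec Rinf_pos. case=> h1 h2.
  exact: (sqrt_unique_scaled Rinf_pos c0 Rinf_c h1 h2).
rewrite E2. apply: (conv_ext (u := fun n => sqrtop c (Rn n) x)); first by move=> n; rewrite E1.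
apply: conv_scale.
apply: (Root_cont (Tn := fun n => scl c (Rn n))).
- move=> n; exact: scl_good (Rn_pos n) c0 (Rn_c n).
- exact: scl_good Rinf_pos c0 Rinf_c.
- move=> y; exact: conv_scale (Rinf_conv y).
Qed.

Lemma P_Sinf (b : bool) x : (if b then PA else PB) (op_sqrt ip Rinf x) = 0.
Proof.
set P := if b then PA else PB.
have hP : orth_proj ip P by rewrite /P; case: (b).
apply: small_eq0 => e e0.
have e2 : 0 < e / 2 by lra.
have d0 : 0 < (e / 2) ^+ 2 by exact: exprn_gt0.
case: (decr_cauchy (rr_dec ^~ x) (rr_ge0 ^~ x) d0) => N1 h1.
case: (Sn_conv x e2) => N2 h2.
set K := (N1 + N2)%N.
set n := if b then K.*2.+1 else K.*2.
have hn : (K <= n)%N.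
  rewrite /n; case: (b); rewrite -addnn ?leq_addr //.
  exact: leq_trans (leq_addr _ _) (leqnSn _).
have hPn : Pn n = P by rewrite /Pn /n /P; case: (b) => /=; rewrite odd_double.
have hn1 : (N1 <= n)%N by apply: leq_trans hn; rewrite leq_addr.
have hn2 : (N2 <= n)%N by apply: leq_trans hn; rewrite leq_addl.
have g1 : nrm (P (Sn n x)) ^+ 2 = rr n x - rr n.+1 x.
  have := Phi_diff_ip (Rn_pos n) (Pn_proj n) x. rewrite hPn.
  move=> /(congr1 Rc). rewrite RcC => <-. rewrite /rr ipBl RcB.
  by rewrite Rn_succ hPn.
have g2 := h1 n.+1 (leq_trans hn1 (leqnSn _)).
have g3 : rr n x <= rr N1 x.
  move: hn1 => /subnKC <-. elim: (n - N1)%N => [|d IH]; first by rewrite addn0.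
  by rewrite addnS; apply: le_trans (rr_dec _ _) IH.
have g4 : nrm (P (Sn n x)) <= e / 2.
  apply: sq_le_bound; last lra. rewrite g1. lra.
have g5 := h2 n hn2.
have g6 : nrm (P (op_sqrt ip Rinf x) - P (Sn n x)) <= nrm (Sn n x - op_sqrt ip Rinf x).
  rewrite -(TB (P_lin hP)) nrmB_sym. exact: nrmP_le.
have := nrmB_tri (P (op_sqrt ip Rinf x)) (P (Sn n x)) 0. rewrite !subr0. lra.
Qed.

End Bnd.

Lemma main_sec :
  (forall n : nat,
     [/\ loewner_le ip (fun _ => 0) (Rn n.+1),
         loewner_le ip (Rn n.+1) (Rn n) &
         loewner_le ip (Rn n) R0]) /\
  exists Rinf : V -> V,
    [/\ positive_op ip Rinf /\ sot_conv ip Rn Rinf,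
        (forall L : V -> V, positive_op ip L -> sot_conv ip Rn L ->
           forall x : V, L x = Rinf x),
        loewner_le ip (fun _ => 0) Rinf /\ loewner_le ip Rinf R0,
        (forall x : V, PA (Rinf x) = 0 /\ PB (Rinf x) = 0) &
        (forall x : V, Rinf x = Phi ip PA Rinf x /\ Rinf x = Phi ip PB Rinf x)].
Proof.
split.
  move=> n; split.
  - apply: (positive_ext (T := Rn n.+1)); [by move=> x; rewrite subr0 | exact: Rn_pos].
  - exact: Rn_step.
  - exact: (Rn_dec (leq0n n)).
case: (bounded_opb (proj1 hR0)) => C0 hC0.
set S := op_sqrt ip (Rinf).
have hS := op_sqrt_spec (Rinf_pos hC0).
have PS : forall (b : bool) x, (if b then PA else PB) (S x) = 0.
  move=> b x. have := P_Sinf hC0 b x. exact.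
have RS : forall x, Rinf x = S (S x) by move=> x; rewrite /S (proj2 hS).
exists (Rinf); split.
- split; [exact: Rinf_pos hC0 | exact: Rinf_conv hC0].
- move=> L _ hL x. exact: conv_uniq (hL x) (Rinf_conv hC0 x).
- split; last exact: Rinf_le hC0.
  apply: (positive_ext (T := Rinf)); [by move=> x; rewrite subr0 | exact: Rinf_pos hC0].
- by move=> x; rewrite RS; split; [exact: (PS true) | exact: (PS false)].
- move=> x; rewrite /Phi -/S; split.
    by rewrite (PS true) subr0 RS.
  by rewrite (PS false) subr0 RS.
Qed.

End Main.

End Hilb.

Theorem theorem2p1 (R : realType) (V : lmodType R[i]) (ip : V -> V -> R[i])
  (hH : is_hilbert ip) (PA PB R0 : V -> V)
  (hPA : orth_proj ip PA) (hPB : orth_proj ip PB) (hR0 : positive_op ip R0) :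
  let Rn := alt_seq ip PA PB R0 in
  (forall n : nat,
     [/\ loewner_le ip (fun _ => 0) (Rn n.+1),
         loewner_le ip (Rn n.+1) (Rn n) &
         loewner_le ip (Rn n) R0]) /\
  exists Rinf : V -> V,
    [/\ positive_op ip Rinf /\ sot_conv ip Rn Rinf,
        (forall L : V -> V, positive_op ip L -> sot_conv ip Rn L ->
           forall x : V, L x = Rinf x),
        loewner_le ip (fun _ => 0) Rinf /\ loewner_le ip Rinf R0,
        (forall x : V, PA (Rinf x) = 0 /\ PB (Rinf x) = 0) &
        (forall x : V, Rinf x = Phi ip PA Rinf x /\ Rinf x = Phi ip PB Rinf x)].
Proof.
move=> Rn. exact: (main_sec hH hPA hPB hR0).
Qed.
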